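(* Let $\beta\ge 2$ and $t\ge 0$ be integers, and let $G$ be a cactus with $2\beta$ vertices, exactly $t$ cycles, a perfect matching, and minimum degree $\delta(G)\ge 2$. Then $$SO(G)<\Phi(\beta,t)=(\beta+t-1)\sqrt{(\beta+t)^{2}+4}+\sqrt{(\beta+t)^{2}+1}+\sqrt{5}\,(\beta-t-1)+2\sqrt{2}\,t.$$
   Context: All graphs are finite, simple and connected. For a graph $G$, $d_u$ denotes the degree of vertex $u$, $\delta(G)$ the minimum degree, and the Sombor index is $SO(G)=\sum_{uv\in E(G)}\sqrt{d_u^2+d_v^2}$. A cactus is a connected graph in which any two cycles have at most one common vertex. *)

(* Defs.v *)
From HB Require Import structures.
From mathcomp Require Import all_boot all_order all_algebra.
From mathcomp Require Import reals.
Set Implicit Arguments. Unset Strict Implicit. Unset Printing Implicit Defensive.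
Import Order.TTheory GRing.Theory Num.Theory.

Definition simple_graph (T : finType) (e : rel T) : Prop :=
  symmetric e /\ irreflexive e.

Definition graph_connected (T : finType) (e : rel T) : Prop :=
  forall x y : T, connect e x y.

Definition edges (T : finType) (e : rel T) : {set {set T}} :=
  [set A : {set T} | [exists u, exists v, e u v && (A == [set u; v])]].

Definition deg (T : finType) (e : rel T) (u : T) : nat := #|[set v | e u v]|.

Definition min_deg_ge (T : finType) (e : rel T) (k : nat) : Prop :=
  forall u : T, k <= deg e u.

Definition cverts (T : finType) (F : {set {set T}}) : {set T} :=
  \bigcup_(f in F) f.
Definition frel (T : finType) (F : {set {set T}}) : rel T :=
  fun x y => [set x; y] \in F.

Definition is_cycle (T : finType) (e : rel T) (F : {set {set T}}) : bool :=
  [&& F != set0, F \subset edges e,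
      [forall v, (v \in cverts F) ==> (#|[set f in F | v \in f]| == 2)]
    & [forall x, forall y,
         ((x \in cverts F) && (y \in cverts F)) ==> connect (frel F) x y]].

Definition cycles (T : finType) (e : rel T) : {set {set {set T}}} :=
  [set F | is_cycle e F].

Definition num_cycles (T : finType) (e : rel T) : nat := #|cycles e|.

Definition cactus (T : finType) (e : rel T) : Prop :=
  graph_connected e /\
  forall F1 F2, is_cycle e F1 -> is_cycle e F2 -> F1 != F2 ->
    #|cverts F1 :&: cverts F2| <= 1.

Definition has_perfect_matching (T : finType) (e : rel T) : Prop :=
  exists M : {set {set T}}, M \subset edges e /\
    forall v : T, #|[set f in M | v \in f]| = 1.

Local Open Scope ring_scope.

(* Sombor index: sum over edges uv of sqrt(d_u^2+d_v^2); each unordered edge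
   is counted twice in the sum over ordered adjacent pairs, hence the 1/2. *)
Definition sombor (R : realType) (T : finType) (e : rel T) : R :=
  2^-1 * \sum_(u : T) \sum_(v : T | e u v)
     Num.sqrt ((deg e u)%:R ^+ 2 + (deg e v)%:R ^+ 2).

Definition Phi (R : realType) (beta t : nat) : R :=
  ((beta + t)%:R - 1) * Num.sqrt ((beta + t)%:R ^+ 2 + 4)
  + Num.sqrt ((beta + t)%:R ^+ 2 + 1)
  + Num.sqrt 5 * (beta%:R - t%:R - 1)
  + 2 * Num.sqrt 2 * t%:R.

(* Main.v *)
Require Import Defs.
From HB Require Import structures.
From mathcomp Require Import all_boot all_order all_algebra.
From mathcomp Require Import reals.
From mathcomp Require Import ring lra zify.
Import Order.TTheory GRing.Theory Num.Theory.
Set Implicit Arguments. Unset Strict Implicit. Unset Printing Implicit Defensive.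

Section Cyc.
Variable T : finType.

Lemma next_ne (c : seq T) w : uniq c -> 2 < size c -> w \in c ->
  next c w != w /\ next c (next c w) != w.
Proof.
move=> Uc Sc wc.
have [i q Hq] := rot_to wc.
have Ur : uniq (rot i c) by rewrite rot_uniq.
have Sr : 2 < size (rot i c) by rewrite size_rot.
rewrite -!(next_rot i Uc) Hq.
rewrite Hq in Ur Sr.
case: q Hq Ur Sr => [|a [|b q]] //= Hq Ur _.
move: Ur; rewrite !inE !negb_or => /andP[/and3P[wa wb wq] /andP[/andP[ab aq] _]].
rewrite /= eqxx.
rewrite (eq_sym a w) (negbTE wa) eqxx; split=> //.
by rewrite eq_sym.
Qed.

Definition cedges (c : seq T) : {set {set T}} := [set [set x; next c x] | x in c].

Lemma cverts_c (c : seq T) v : (v \in cverts (cedges c)) = (v \in c).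
Proof.
apply/bigcupP/idP => [[f /imsetP[x xc ->]]|vc].
  by rewrite !inE => /orP[/eqP->|/eqP->]; rewrite ?mem_next.
by exists [set v; next c v]; [apply/imsetP; exists v | rewrite !inE eqxx].
Qed.

Lemma cycle_is_cycle (e : rel T) (c : seq T) : uniq c -> 2 < size c ->
  (forall x, x \in c -> [set x; next c x] \in edges e) ->
  is_cycle e (cedges c).
Proof.
move=> Uc Sc He.
have c0 : exists x, x \in c by move: Sc; case: (c) => // x cc _; exists x; rewrite mem_head.
apply/and4P; split.
- case: c0 => x xc; apply/set0Pn; exists [set x; next c x]; apply/imsetP; exists x => //.
- by apply/subsetP => f /imsetP[x xc ->]; apply: He.
- apply/forallP => w; apply/implyP; rewrite cverts_c => wc.
  have [n1 n2] := next_ne Uc Sc wc.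
  have -> : [set f in cedges c | w \in f] = [set [set w; next c w]; [set prev c w; w]].
    apply/setP => f; rewrite !inE; apply/andP/orP.
    + case=> /imsetP[x xc ->]; rewrite !inE => /orP[/eqP->|/eqP wn]; first by left.
      by right; rewrite wn prev_next.
    + case=> /eqP->; split; rewrite ?inE ?eqxx ?orbT //; apply/imsetP.
        by exists w.
      by exists (prev c w); rewrite ?mem_prev // next_prev.
  rewrite cards2; suff -> : ([set w; next c w] != [set prev c w; w]) by []; apply/eqP => E.
  have : next c w \in [set prev c w; w] by rewrite -E !inE eqxx orbT.
  rewrite !inE (negbTE n1) orbF => /eqP Hp.
  by move: n2; rewrite Hp (next_prev Uc) eqxx.
- apply/forallP => x; apply/forallP => y; apply/implyP; rewrite !cverts_c => /andP[xc yc].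
  have fc := cycle_next Uc.
  have : fconnect (next c) x y by rewrite (fconnect_cycle fc xc).
  move/iter_findex; move: (findex _ x y) => k <-.
  elim: k => [|k IH]; first exact: connect0.
  apply: connect_trans IH _; rewrite iterS; apply: connect1.
  rewrite /frel; apply/imsetP; exists (iter k (next c) x) => //.
  by elim: k => //= k IH; rewrite mem_next.
Qed.

End Cyc.

Section Tree.
Variables (T : finType) (e : rel T) (r : T).
Hypotheses (sym_e : symmetric e) (irr_e : irreflexive e)
  (con_e : forall x y, connect e x y).

Definition reach x k := [exists p : k.-tuple T, path e r p && (last r p == x)].

Lemma reach_ex x : exists k, reach x k.
Proof.
have /connectP[p ep ->] := con_e r x.
exists (size p); apply/existsP; exists (in_tuple p); by rewrite /= ep eqxx.
Qed.

Definition dist x := ex_minn (reach_ex x).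

Lemma par_ex x : x != r -> exists y, e y x && (dist y < dist x).
Proof.
move=> xr; rewrite /dist; case: ex_minnP => k /existsP[p /andP[ep /eqP lp]] _.
case: p ep lp => s /= /eqP <-; case/lastP: s => [|s y] /=; first by move=> _ lx; rewrite lx eqxx in xr.
rewrite rcons_path last_rcons size_rcons => /andP[es ey] <-.
exists (last r s); rewrite ey /=.
case: ex_minnP => k' _ /(_ (size s)) H; apply: leq_ltn_trans (H _) _ => //.
by apply/existsP; exists (in_tuple s); rewrite /= es eqxx.
Qed.

Definition par x := if [pick y | e y x && (dist y < dist x)] is Some y then y else r.

Lemma par_spec x : x != r -> e (par x) x && (dist (par x) < dist x).
Proof.
move=> xr; rewrite /par; case: pickP => [y //|H].
by have [y Hy] := par_ex xr; rewrite H in Hy.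
Qed.

Definition Tr : rel T := fun u v => ((u != r) && (v == par u)) || ((v != r) && (u == par v)).

Lemma Tr_sym : symmetric Tr.
Proof. by move=> u v; rewrite /Tr orbC. Qed.

Lemma Tr_e u v : Tr u v -> e u v.
Proof.
case/orP=> /andP[nr /eqP ->]; have /andP[H _] := par_spec nr => //.
by rewrite sym_e.
Qed.

Lemma Tr_root x : connect Tr x r.
Proof.
elim: {x}(dist x).+1 {-2}x (ltnSn (dist x)) => // n IH x Hx.
have [->|xr] := eqVneq x r; first exact: connect0.
have /andP[_ Hd] := par_spec xr.
apply: (connect_trans (y := par x)).
  by apply: connect1; rewrite /Tr /= xr eqxx.
by apply: IH; exact: leq_trans Hd _.
Qed.

Lemma Tr_con u v : connect Tr u v.
Proof.
apply: connect_trans (Tr_root u) _.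
by rewrite (sym_connect_sym Tr_sym); apply: Tr_root.
Qed.

Lemma card_edges_Tr : #|edges Tr| <= #|T|.-1.
Proof.
rewrite -(cardsC1 r); apply: leq_trans (leq_imset_card (fun x => [set x; par x]) _).
apply: subset_leq_card; apply/subsetP => f; rewrite inE => /existsP[u /existsP[v /andP[Tuv /eqP ->]]].
case/orP: Tuv => /andP[nr /eqP ->]; apply/imsetP.
  by exists u; rewrite ?inE.
by exists v; rewrite ?inE // setUC.
Qed.

End Tree.

Section Count.
Variables (T : finType) (e : rel T) (r : T).
Hypotheses (sym_e : symmetric e) (irr_e : irreflexive e)
  (con_e : forall x y, connect e x y).

Local Notation Tr := (@Tr T e r con_e).

Lemma edges_sub (e1 e2 : rel T) : subrel e1 e2 -> edges e1 \subset edges e2.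
Proof.
move=> H; apply/subsetP => f; rewrite !inE => /existsP[u /existsP[v /andP[h1 h2]]].
by apply/existsP; exists u; apply/existsP; exists v; rewrite H.
Qed.

Lemma mem_edges (e1 : rel T) u v : e1 u v -> [set u; v] \in edges e1.
Proof. by move=> h; rewrite inE; apply/existsP; exists u; apply/existsP; exists v; rewrite h eqxx. Qed.

Lemma cycle_exists f : f \in edges e :\: edges Tr ->
  exists F, [&& F \in cycles e, f \in F & F \subset f |: edges Tr].
Proof.
move=> fN; have fe : f \in edges e by move: fN; rewrite inE => /andP[].
move: fN; rewrite inE => /andP[fT]; rewrite inE => /existsP[u /existsP[v /andP[euv /eqP fE]]].
have nT : ~~ Tr u v by apply: contra fT => h; rewrite fE mem_edges.
have uv : u != v by apply: contraTneq euv => ->; rewrite irr_e.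
have /connectP[p pp lp] := Tr_con r con_e u v.
case: (shortenP pp) lp => p' pp' Up _ lp.
have Sc : 2 < size (u :: p').
  case: (p') pp' Up lp => [|a [|b q]] //=.
    by move=> _ _ E; rewrite E eqxx in uv.
  by rewrite andbT => h _ E; rewrite E h in nT.
set c := u :: p'.
pose e2 := fun x y => Tr x y || ([set x; y] == f).
have cyc : cycle e2 c.
  rewrite /c /= rcons_path -lp; apply/andP; split.
    by apply: sub_path pp' => x y h; rewrite /e2 h.
  by rewrite /e2 fE lp setUC eqxx orbT.
have He2 x : x \in c -> e2 x (next c x) := next_cycle cyc.
have HE x : x \in c -> [set x; next c x] \in f |: edges Tr.
  move=> xc; case/orP: (He2 x xc) => [h|/eqP ->]; rewrite ?setU11 //.
  by rewrite setU1r // mem_edges.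
exists (cedges c); apply/and3P; split.
- rewrite inE; apply: cycle_is_cycle => // x xc.
  have := HE x xc; rewrite in_setU1 => /orP[/eqP->|h].
    by [].
  exact: (subsetP (edges_sub (@Tr_e _ _ r sym_e con_e))).
- apply/imsetP; exists v; first by rewrite lp mem_last.
  rewrite fE setUC; congr [set _; _].
  rewrite lp next_nth mem_last /c index_last //.
  by rewrite nth_default.
- by apply/subsetP => g /imsetP[x xc ->]; apply: HE.
Qed.

Definition cyc_of f := odflt set0 [pick F | [&& F \in cycles e, f \in F & F \subset f |: edges Tr]].

Lemma cyc_of_spec f : f \in edges e :\: edges Tr ->
  [&& cyc_of f \in cycles e, f \in cyc_of f & cyc_of f \subset f |: edges Tr].
Proof.
move=> fN; rewrite /cyc_of; case: pickP => [F //|H].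
by have [F HF] := cycle_exists fN; rewrite H in HF.
Qed.

Lemma count_edges : #|edges e| <= #|cycles e| + #|T|.-1.
Proof.
set N := edges e :\: edges Tr.
have h1 : #|edges e| <= #|N| + #|edges Tr|.
  apply: leq_trans (leq_card_setU N (edges Tr)).
  by apply: subset_leq_card; apply/subsetP => f fe; rewrite in_setU in_setD fe; case: (f \in edges Tr); rewrite ?orbT.
apply: leq_trans h1 _; apply: leq_add; last exact: card_edges_Tr.
rewrite -(card_in_imset (f := cyc_of)).
  apply: subset_leq_card; apply/subsetP => F /imsetP[f fN ->].
  by case/and3P: (cyc_of_spec fN).
move=> f g fN gN E.
case/and3P: (cyc_of_spec fN) => _ ff _.
case/and3P: (cyc_of_spec gN) => _ _ /subsetP sg.
move: (sg f); rewrite -E => /(_ ff); rewrite in_setU1 => /orP[/eqP //|fT].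
by move: fN; rewrite in_setD fT.
Qed.

End Count.

Section Hand.
Variables (T : finType) (e : rel T).
Hypotheses (sym_e : symmetric e) (irr_e : irreflexive e).

Definition rk (x : T) : nat := enum_rank x.

Lemma set2_inj (a b c d : T) : [set a; b] = [set c; d] -> rk a < rk b -> rk c < rk d -> (a, b) = (c, d).
Proof.
move=> E ab cd.
have ina : a \in [set c; d] by rewrite -E !inE eqxx.
have inb : b \in [set c; d] by rewrite -E !inE eqxx orbT.
have neab : a != b by apply: contraTneq ab => ->; rewrite ltnn.
rewrite !inE in ina inb.
case/orP: ina => /eqP ea; case/orP: inb => /eqP eb.
- by rewrite ea eb eqxx in neab.
- by rewrite ea eb.
- by move: ab cd; rewrite ea eb => h1 h2; have := ltn_trans h1 h2; rewrite ltnn.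
- by rewrite ea eb eqxx in neab.
Qed.

Lemma sum_deg : \sum_u deg e u = #|[set p : T * T | e p.1 p.2]|.
Proof.
transitivity (\sum_(u : T) \sum_(v : T) (if e u v then 1 else 0)).
  apply: eq_bigr => u _; rewrite /deg -sum1_card big_mkcond /=.
  by apply: eq_bigr => v _; rewrite !inE.
rewrite pair_bigA /= -sum1_card big_mkcond /=.
rewrite [RHS]big_mkcond /=.
by apply: eq_bigr => -[u v] _; rewrite inE.
Qed.

Lemma handshake : \sum_u deg e u <= 2 * #|edges e|.
Proof.
rewrite sum_deg.
set P := [set p : T * T | e p.1 p.2].
set A := [set p in P | rk p.1 < rk p.2].
set B := [set p in P | rk p.2 < rk p.1].
have PAB : P \subset A :|: B.
  apply/subsetP => -[u v] Pp; rewrite in_setU !inE /=.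
  rewrite inE /= in Pp; rewrite Pp /=.
  case: (ltngtP (rk u) (rk v)) => // E.
  have : u = v by apply: enum_rank_inj; apply: val_inj.
  by move=> uv; rewrite uv irr_e in Pp.
apply: leq_trans (subset_leq_card PAB) _; apply: leq_trans (leq_card_setU A B) _.
rewrite mul2n -addnn; apply: leq_add.
- rewrite -(card_in_imset (f := fun p : T * T => [set p.1; p.2])).
    apply: subset_leq_card; apply/subsetP => f /imsetP[[u v]]; rewrite !inE /= => /andP[euv _] ->.
    by apply/existsP; exists u; apply/existsP; exists v; rewrite euv eqxx.
  move=> [u v] [u' v']; rewrite !inE /= => /andP[_ h1] /andP[_ h2] E.
  exact: set2_inj E h1 h2.
- rewrite -(card_in_imset (f := fun p : T * T => [set p.1; p.2])).
    apply: subset_leq_card; apply/subsetP => f /imsetP[[u v]]; rewrite !inE /= => /andP[euv _] ->.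
    by apply/existsP; exists u; apply/existsP; exists v; rewrite euv eqxx.
  move=> [u v] [u' v']; rewrite !inE /= => /andP[_ h1] /andP[_ h2] E.
  have := set2_inj (a := v) (b := u) (c := v') (d := u').
  by rewrite setUC [[set v'; u']]setUC E => /(_ erefl h1 h2) [-> ->].
Qed.

Lemma deg_le u : deg e u <= #|T|.-1.
Proof.
rewrite /deg -(cardsC1 u); apply: subset_leq_card; apply/subsetP => v.
by rewrite !inE; apply: contraTneq => ->; rewrite irr_e.
Qed.

End Hand.

Local Open Scope ring_scope.

Lemma sqrt_ub' (R : realType) (a x : R) : 0 <= a -> x <= a ^+ 2 -> Num.sqrt x <= a.
Proof.
move=> ha hx; rewrite -(ger0_norm ha) -sqrtr_sqr.
case: (lerP 0 x) => hx0; first by rewrite ler_sqrt // sqr_ge0.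
by rewrite (ltr0_sqrtr hx0) sqrtr_ge0.
Qed.

Lemma sqrt_lb' (R : realType) (a x : R) : 0 <= a -> a ^+ 2 <= x -> a <= Num.sqrt x.
Proof.
move=> ha hx; have hx0 : 0 <= x by apply: le_trans hx; apply: sqr_ge0.
by rewrite -{1}(ger0_norm ha) -sqrtr_sqr ler_sqrt.
Qed.

Lemma sqrt_edge (R : realType) (a b : R) : 2 <= a -> 2 <= b ->
  Num.sqrt (a ^+ 2 + b ^+ 2) <= a + b - (4 - 2 * Num.sqrt 2).
Proof.
move=> ha hb.
have y0 : 0 <= Num.sqrt 2 :> R by apply: sqrtr_ge0.
have yy : Num.sqrt 2 ^+ 2 = 2 :> R by rewrite sqr_sqrtr //; lra.
have y1 : 1 <= Num.sqrt 2 :> R.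
  apply: sqrt_lb'; lra.
have y2 : Num.sqrt 2 <= 2 :> R.
  apply: sqrt_ub'; lra.
apply: sqrt_ub'; first lra.
have h1 : 0 <= (a - 2) * (b - 2) by apply: mulr_ge0; lra.
have h2 : 0 <= (Num.sqrt 2 - 1) * (a - 2) by apply: mulr_ge0; lra.
have h3 : 0 <= (Num.sqrt 2 - 1) * (b - 2) by apply: mulr_ge0; lra.
lra.
Qed.

Section SO.
Variables (R : realType) (T : finType) (e : rel T).
Hypotheses (sym_e : symmetric e) (md : min_deg_ge e 2).

Let d u : R := (deg e u)%:R.

Lemma sum_const_nbr u (K : R) : \sum_(v | e u v) K = K * d u.
Proof.
rewrite (eq_bigl (fun v => v \in [set v | e u v])); last by move=> v; rewrite inE.
by rewrite sumr_const mulr_natr.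
Qed.

Lemma sum_nbr_deg : \sum_u \sum_(v | e u v) d v = \sum_u d u * d u.
Proof.
transitivity (\sum_u \sum_v (if e u v then d v else 0)).
  by apply: eq_bigr => u _; rewrite big_mkcond.
rewrite exchange_big /=; apply: eq_bigr => v _.
rewrite -big_mkcond /=.
rewrite (eq_bigl (fun u => e v u)); last by move=> u; rewrite sym_e.
by rewrite sum_const_nbr.
Qed.

Lemma sombor_le : sombor R e <= \sum_u d u ^+ 2 - (2 - Num.sqrt 2) * \sum_u d u.
Proof.
rewrite /sombor.
have H : \sum_u \sum_(v | e u v) Num.sqrt ((deg e u)%:R ^+ 2 + (deg e v)%:R ^+ 2)
   <= \sum_u \sum_(v | e u v) (d u + d v - (4 - 2 * Num.sqrt 2)).
  apply: ler_sum => u _; apply: ler_sum => v _; apply: sqrt_edge; rewrite /d ler_nat; exact: md.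
have E : \sum_u \sum_(v | e u v) (d u + d v - (4 - 2 * Num.sqrt 2))
   = 2 * (\sum_u d u ^+ 2 - (2 - Num.sqrt 2) * \sum_u d u).
  transitivity (\sum_u (d u * d u) + \sum_u \sum_(v | e u v) d v - (4 - 2 * Num.sqrt 2) * \sum_u d u).
    rewrite mulr_sumr -big_split /= -sumrB; apply: eq_bigr => u _.
    rewrite big_split /= big_split /= !sum_const_nbr; ring.
  rewrite sum_nbr_deg.
  have -> : \sum_u d u ^+ 2 = \sum_u (d u * d u) by apply: eq_bigr => u _; rewrite expr2.
  ring.
rewrite E in H.
have h2 : 0 < 2^-1 :> R by rewrite invr_gt0; lra.
rewrite -(ler_pM2l h2) mulrA mulVf ?mul1r in H; last by apply: lt0r_neq0; lra.
exact: H.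
Qed.

End SO.

Lemma caseB (R : realType) (b s : R) : 2 <= b -> b - 3/2 <= s ->
  (2*s*(2*b+1)+8*b - 5857/10000*(4*b+2*s)) * (b+s+2) <
  ((b+s)*(b+s+1) + (b+s+1) + 2236/1000*(b-1) + 5923/10000*(s+1)) * (b+s+2) + 2*(b+s).
Proof.
move=> hb hs.
have [p hp eb] : exists2 p : R, 0 <= p & b = p + 2 by exists (b-2); [lra | ring].
have [q hq es] : exists2 q : R, 0 <= q & s = p + q + 1/2 by exists (s - b + 3/2); [lra | rewrite eb; lra].
rewrite es eb.
have h1 : 0 <= (q - 61/100)^+2 by apply: sqr_ge0.
have h2 : 0 <= p * (q - 55/100)^+2 by apply: mulr_ge0 => //; apply: sqr_ge0.
have h3 : 0 <= q^+3 by apply: exprn_ge0.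
have h4 : 0 <= p * q by apply: mulr_ge0.
have h5 : 0 <= p^+2 by apply: sqr_ge0.
lra.
Qed.

Lemma caseA (R : realType) (b s : R) : 0 <= s -> s <= b - 3/2 ->
  (2*s*(2*s+4)+8*b - 5857/10000*(4*b+2*s)) * (b+s+2) <
  ((b+s)*(b+s+1) + (b+s+1) + 2236/1000*(b-1) + 5923/10000*(s+1)) * (b+s+2) + 2*(b+s).
Proof.
move=> hs hb.
have [p hp eb] : exists2 p : R, 0 <= p & b = p + s + 3/2 by exists (b - 3/2 - s); lra.
rewrite eb.
have h1 : 0 <= p * s by apply: mulr_ge0.
have h2 : 0 <= p * s^+2 by apply: mulr_ge0 => //; apply: sqr_ge0.
have h3 : 0 <= p^+2 * s by apply: mulr_ge0 => //; apply: sqr_ge0.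
have h4 : 0 <= p^+3 by apply: exprn_ge0.
have h5 : 0 <= p^+2 by apply: sqr_ge0.
have h6 : 0 <= s^+2 by apply: sqr_ge0.
lra.
Qed.

Definition PhiR (R : realType) (b t : R) : R :=
  (b + t - 1) * Num.sqrt ((b + t) ^+ 2 + 4) + Num.sqrt ((b + t) ^+ 2 + 1)
  + Num.sqrt 5 * (b - t - 1) + 2 * Num.sqrt 2 * t.

Arguments PhiR {R}.

Lemma sq_le (R : realType) (a b : R) : 0 <= a -> b ^+ 2 <= a ^+ 2 -> b <= a.
Proof.
move=> ha h; apply: le_trans (ler_norm b) _.
by rewrite -sqrtr_sqr -(ger0_norm ha) -(sqrtr_sqr a) ler_sqrt // sqr_ge0.
Qed.

Lemma sqrt_lb (R : realType) (a x : R) : 0 <= a -> a ^+ 2 <= x -> a <= Num.sqrt x.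
Proof.
move=> ha hx; have hx0 : 0 <= x by apply: le_trans hx; apply: sqr_ge0.
by rewrite -{1}(ger0_norm ha) -sqrtr_sqr ler_sqrt.
Qed.

Lemma sqrt_ub (R : realType) (a x : R) : 0 <= a -> x <= a ^+ 2 -> Num.sqrt x <= a.
Proof.
move=> ha hx; rewrite -(ger0_norm ha) -sqrtr_sqr.
case: (lerP 0 x) => hx0; first by rewrite ler_sqrt // sqr_ge0.
by rewrite (ltr0_sqrtr hx0) sqrtr_ge0.
Qed.

Lemma r2l (R : realType) : 14142/10000 <= Num.sqrt 2 :> R.
Proof. by apply: sqrt_lb; lra. Qed.
Lemma r2u (R : realType) : Num.sqrt 2 <= 14143/10000 :> R.
Proof. by apply: sqrt_ub; lra. Qed.
Lemma r5l (R : realType) : 2236/1000 <= Num.sqrt 5 :> R.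
Proof. by apply: sqrt_lb; lra. Qed.
Lemma r5u (R : realType) : Num.sqrt 5 <= 22361/10000 :> R.
Proof. by apply: sqrt_ub; lra. Qed.

Lemma hw_lem (R : realType) (D : R) : 0 <= D -> D <= Num.sqrt (D ^+ 2 + 1).
Proof. by move=> h; apply: sqrt_lb => //; lra. Qed.

Lemma hz_lem (R : realType) (D : R) : 1 <= D -> D * (D + 1) + 2 <= Num.sqrt (D ^+ 2 + 4) * (D + 1).
Proof.
move=> hD.
have z0 : 0 <= Num.sqrt (D ^+ 2 + 4) by apply: sqrtr_ge0.
have zz : Num.sqrt (D ^+ 2 + 4) ^+ 2 = D ^+ 2 + 4.
  by rewrite sqr_sqrtr //; apply: addr_ge0; [exact: sqr_ge0 | lra].
apply: sq_le; first by apply: mulr_ge0 => //; lra.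
rewrite exprMn zz; lra.
Qed.

Lemma zlow (R : realType) (D : R) : 1 <= D ->
  (D - 1) * D + 2 * (D - 1) / (D + 1) <= (D - 1) * Num.sqrt (D ^+ 2 + 4).
Proof.
move=> hD.
have hD1 : 0 < D + 1 by lra.
have hz := hz_lem hD.
have h : D + 2 / (D + 1) <= Num.sqrt (D ^+ 2 + 4).
  have -> : D + 2 / (D + 1) = (D * (D + 1) + 2) / (D + 1).
    by field; rewrite lt0r_neq0.
  by rewrite ler_pdivrMr.
have -> : (D - 1) * D + 2 * (D - 1) / (D + 1) = (D - 1) * (D + 2 / (D + 1)) by ring.
by apply: ler_wpM2l => //; rewrite subr_ge0.
Qed.

Lemma divcase (R : realType) (L P D : R) : 0 < D + 1 ->
  L * (D + 1) < P * (D + 1) + 2 * (D - 1) -> L < P + 2 * (D - 1) / (D + 1).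
Proof.
move=> hD h; rewrite -(ltr_pM2r hD) mulrDl.
by rewrite divfK // lt0r_neq0.
Qed.

Lemma H5 (R : realType) (b s : R) : 2 <= b -> 0 <= s ->
  559/250*(b-1) + 5923/10000*(s+1) <= Num.sqrt 5 * (b - (s+1) - 1) + 2 * Num.sqrt 2 * (s+1).
Proof.
move=> hb hs.
have h5a : 559/250*(b-1) <= Num.sqrt 5 * (b-1).
  by apply: ler_wpM2r; [rewrite subr_ge0; apply: le_trans hb; lra | have := @r5l R; lra].
have h5b : 5923/10000*(s+1) <= (2 * Num.sqrt 2 - Num.sqrt 5)*(s+1).
  apply: ler_wpM2r; first by apply: addr_ge0.
  by have := @r5u R; have := @r2l R; lra.
move: (Num.sqrt 5) (Num.sqrt 2) h5a h5b => y5 y2 h5a h5b.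
lra.
Qed.

Lemma Hc (R : realType) (x : R) : 0 <= x -> 5857/10000 * x <= (2 - Num.sqrt 2) * x.
Proof.
move=> hx; apply: ler_wpM2r => //.
by have := @r2u R; move: (Num.sqrt 2) => y; lra.
Qed.

Lemma RL (R : realType) (b s Q : R) : 2 <= b -> 0 <= s ->
  Q <= 2*s*(2*s+4) + 8*b -> Q <= 2*s*(2*b+1) + 8*b ->
  Q - (2 - Num.sqrt 2) * (4*b + 2*s) < PhiR b (s+1).
Proof.
move=> hb hs hQ1 hQ2.
have h5 := H5 hb hs.
have hc0 : 0 <= 4*b+2*s by lra.
have hc := Hc hc0.
have hD : 1 <= b + (s + 1) by lra.
have hw := hw_lem (ltW (lt_le_trans ltr01 hD)).
have hz := zlow hD.
have hD1 : 0 < b + (s + 1) + 1 by lra.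
have hA' : s <= b - 3/2 -> (2*s*(2*s+4)+8*b - 5857/10000*(4*b+2*s)) <
   ((b+s)*(b+s+1) + (b+s+1) + 2236/1000*(b-1) + 5923/10000*(s+1)) + 2 * (b + (s + 1) - 1) / (b + (s + 1) + 1).
  move=> hA; apply: divcase => //.
  have := @caseA R b s hs hA.
  have -> : b + (s + 1) + 1 = b + s + 2 by ring.
  by have -> : b + (s + 1) - 1 = b + s by ring.
have hB' : b - 3/2 <= s -> (2*s*(2*b+1)+8*b - 5857/10000*(4*b+2*s)) <
   ((b+s)*(b+s+1) + (b+s+1) + 2236/1000*(b-1) + 5923/10000*(s+1)) + 2 * (b + (s + 1) - 1) / (b + (s + 1) + 1).
  move=> hB; apply: divcase => //.
  have := @caseB R b s hb hB.
  have -> : b + (s + 1) + 1 = b + s + 2 by ring.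
  by have -> : b + (s + 1) - 1 = b + s by ring.
rewrite (_ : PhiR b (s+1) = ((b + (s + 1) - 1) * Num.sqrt ((b + (s + 1)) ^+ 2 + 4) + Num.sqrt ((b + (s + 1)) ^+ 2 + 1)) + (Num.sqrt 5 * (b - (s + 1) - 1) + 2 * Num.sqrt 2 * (s + 1))); last by rewrite /PhiR !addrA.
move: hz hw h5 hc hA' hB'.
move: (2 * (b + (s + 1) - 1) / (b + (s + 1) + 1)) => T0.
move: (Num.sqrt ((b + (s + 1)) ^+ 2 + 4)) => z.
move: (Num.sqrt ((b + (s + 1)) ^+ 2 + 1)) => w.
move: (Num.sqrt 5 * (b - (s + 1) - 1) + 2 * Num.sqrt 2 * (s + 1)) => Y.
move: ((2 - Num.sqrt 2) * (4 * b + 2 * s)) => K.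
move: ((b + (s + 1) - 1) * z) => Z.
move=> hz hw h5 hc hA' hB'.
have [hA|hB] := lerP s (b - 3/2).
  have := hA' hA; clear hA' hB'; lra.
have := hB' (ltW hB); clear hA' hB'; lra.
Qed.

Lemma sqrt_mono (R : realType) (x y : R) : 0 <= y -> x <= y -> Num.sqrt x <= Num.sqrt y.
Proof. by move=> hy hxy; rewrite ler_sqrt. Qed.

Lemma PhiR_mono (R : realType) (b t1 t2 : R) : 2 <= b -> 0 <= t1 -> t1 <= t2 ->
  PhiR b t1 <= PhiR b t2.
Proof.
move=> hb h1 h12.
have r2l := @r2l R. have r5u := @r5u R.
have hsq : (b + t1) ^+ 2 <= (b + t2) ^+ 2.
  by rewrite ler_sqr ?nnegrE; lra.
have e1 : (b + t1 - 1) * Num.sqrt ((b + t1) ^+ 2 + 4) <= (b + t2 - 1) * Num.sqrt ((b + t2) ^+ 2 + 4).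
  apply: ler_pM; [lra | exact: sqrtr_ge0 | lra | apply: sqrt_mono; [|lra]].
  by apply: addr_ge0; [apply: sqr_ge0|lra].
have e2 : Num.sqrt ((b + t1) ^+ 2 + 1) <= Num.sqrt ((b + t2) ^+ 2 + 1).
  apply: sqrt_mono; [|lra].
  by apply: addr_ge0; [apply: sqr_ge0|lra].
have e3 : 0 <= (2 * Num.sqrt 2 - Num.sqrt 5) * (t2 - t1) by apply: mulr_ge0; lra.
rewrite /PhiR; lra.
Qed.

Lemma Q_bound (R : realType) (T : finType) (d : T -> R) (X : R) :
  (forall u, 2 <= d u <= X + 2) ->
  \sum_u d u ^+ 2 <= (X + 4) * (\sum_u d u - 2 * #|T|%:R) + 4 * #|T|%:R.
Proof.
move=> H.
apply: le_trans (_ : \sum_u ((d u - 2) * (X + 4) + 4) <= _).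
  apply: ler_sum => u _; have /andP[h1 h2] := H u.
  have : 0 <= (d u - 2) * (X + 2 - d u) by apply: mulr_ge0; lra.
  lra.
rewrite big_split /= -mulr_suml sumrB !sumr_const.
rewrite (eq_card (B := T)) //.
rewrite !mulr_natr; lra.
Qed.

Unset Implicit Arguments.
Theorem lemma4p1 (R : realType) (beta t : nat) (T : finType) (e : rel T) :
  (2 <= beta)%N ->
  simple_graph e ->
  cactus e ->
  #|T| = (2 * beta)%N ->
  num_cycles e = t ->
  has_perfect_matching e ->
  min_deg_ge e 2 ->
  sombor R e < Phi R beta t.
Proof.
move=> hb [sym irr] [con _] hn ht _ md.
have hn0 : (0 < #|T|)%N by rewrite hn muln_gt0 /=; apply: leq_trans hb.
have [r _] : exists r : T, r \in T by apply/card_gt0P.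
have hcnt := count_edges r sym irr con.
have hhs := handshake irr.
have {}hcnt : (#|edges e| <= t + #|T|.-1)%N by rewrite -ht.
set S := (\sum_u deg e u)%N in hhs.
have hS : (S + 2 <= 2 * t + 2 * #|T|)%N.
  have : (S <= 2 * t + 2 * #|T|.-1)%N.
    apply: leq_trans hhs _; rewrite -mulnDr leq_mul2l; exact: hcnt.
  by move: hn0; lia.
have hdu u : (deg e u + 2 * #|T| <= S + 2)%N.
  have : (deg e u + 2 * #|T|.-1 <= S)%N.
    rewrite /S (bigD1 u) //= leq_add2l.
    apply: leq_trans (_ : \sum_(i | i != u) 2 <= _)%N; last by apply: leq_sum => i _; exact: md.
    rewrite (eq_bigl (fun i => i \in [set~ u])); last by move=> i; rewrite !inE.
    by rewrite sum_nat_const cardsC1 mulnC.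
  by move: hn0; lia.
have hdl u : ((deg e u).+1 <= #|T|)%N by have := deg_le irr u; move: hn0; lia.
set b : R := beta%:R.
have hnR : #|T|%:R = 2 * b :> R by rewrite hn natrM.
have hbR : 2 <= b by rewrite /b ler_nat.
pose dR u : R := (deg e u)%:R.
have eSR : \sum_u dR u = S%:R by rewrite /S natr_sum.
have hSR : S%:R + 2 <= 2 * t%:R + 2 * (2 * b) :> R.
  by rewrite -hnR -[2 : R]/(2%:R) -!natrM -!natrD ler_nat.
have hduR u : dR u + 2 * (2 * b) <= S%:R + 2.
  by rewrite -hnR -[2 : R]/(2%:R) -!natrM -!natrD ler_nat.
have hdlR u : dR u + 1 <= 2 * b.
  by rewrite -hnR -[1 : R]/(1%:R) -!natrD ler_nat addn1.
have hd2 u : 2 <= dR u by rewrite -[2 : R]/(2%:R) ler_nat; exact: md.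
set s : R := S%:R / 2 - 2 * b.
have eS : S%:R = 4 * b + 2 * s :> R by rewrite /s; lra.
have hs0 : 0 <= s by have := hduR r; have := hd2 r; lra.
have hts : s + 1 <= t%:R by lra.
have Q1 : \sum_u dR u ^+ 2 <= (S%:R - 2 * #|T|%:R + 4) * (\sum_u dR u - 2 * #|T|%:R) + 4 * #|T|%:R.
  apply: Q_bound => u; rewrite hd2 /=; have := hduR u; rewrite hnR; lra.
have Q2 : \sum_u dR u ^+ 2 <= (#|T|%:R - 3 + 4) * (\sum_u dR u - 2 * #|T|%:R) + 4 * #|T|%:R.
  apply: Q_bound => u; rewrite hd2 /=; have := hdlR u; rewrite hnR; lra.
set Q := \sum_u dR u ^+ 2 in Q1 Q2.
rewrite eSR eS hnR in Q1 Q2.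
have Q1' : Q <= 2*s*(2*s+4) + 8*b by lra.
have Q2' : Q <= 2*s*(2*b+1) + 8*b by lra.
have so := sombor_le R sym md.
rewrite -/Q eSR eS in so.
have key := RL hbR hs0 Q1' Q2'.
have mono := PhiR_mono hbR (addr_ge0 hs0 ler01) hts.
have -> : Phi R beta t = PhiR b t%:R by rewrite /Phi /PhiR natrD.
by apply: le_lt_trans so _; apply: lt_le_trans key mono.
Qed.
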